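(* $\mathbb{E}_{base}\cup\mathbb{E}_{models}\subsetneq\mathbb{E}_{Büchi}$.
   Context: Fix a finite nonempty $AP$. LTL formulae $\varphi::=\bot\mid p\mid\neg\varphi\mid\varphi\lor\varphi\mid X\varphi\mid\varphi U\varphi$ with standard semantics on traces in $(2^{AP})^\omega$. Kripke structures $M=(S,I,T,\lambda)$ (finite $S$, nonempty initial set $I$, left-total $T$, labelling $\lambda:S\to2^{AP}$); $M\models\varphi$ iff all traces of $M$ satisfy $\varphi$; $\mathrm{Cn}_{LTL}(X)$ = formulae satisfied by every Kripke structure satisfying all formulae of $X$. Büchi automata over $2^{AP}$ (accepting infinite words via runs visiting recurrence states infinitely often), $\mathcal{L}(A)$ the language, $\mathrm{supp}(A):=\{\varphi\mid\pi\models\varphi\ \forall\pi\in\mathcal{L}(A)\}$. Excerpts: $\mathbb{E}_{base}:=\{\mathrm{Cn}_{LTL}(X)\mid X\text{ finite set of LTL formulae}\}$; $\mathbb{E}_{models}:=\{\{\varphi\mid M\models\varphi\text{ for all }M\in X\}\mid X\text{ finite set of Kripke structures}\}$; $\mathbb{E}_{Büchi}:=\{\mathrm{supp}(A)\mid A\text{ a Büchi automaton over }2^{AP}\}$. *)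

(* Defs.v *)
From Stdlib Require List.
From mathcomp Require Import all_boot.


Unset Printing Implicit Defensive.

Section LTL.
Variable AP : finType.

Inductive ltl : Type :=
| LBot : ltl
| LAtom : AP -> ltl
| LNeg : ltl -> ltl
| LOr : ltl -> ltl -> ltl
| LNext : ltl -> ltl
| LUntil : ltl -> ltl -> ltl.

Definition trace := nat -> {set AP}.

Fixpoint sat_at (pi : trace) (i : nat) (phi : ltl) : Prop :=
  match phi with
  | LBot => False
  | LAtom p => p \in pi i
  | LNeg f => ~ sat_at pi i f
  | LOr f g => sat_at pi i f \/ sat_at pi i g
  | LNext f => sat_at pi i.+1 f
  | LUntil f g => exists k, i <= k /\ sat_at pi k g /\
                   forall j, i <= j -> j < k -> sat_at pi j f
  end.

Definition sat (pi : trace) (phi : ltl) : Prop := sat_at pi 0 phi.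

Record kripke : Type := Kripke {
  kS : finType;
  kI : {set kS};
  kT : rel kS;
  klab : kS -> {set AP};
  kI_nonempty : kI != set0;
  kT_total : forall s, exists s', kT s s'
}.

Definition ktrace (M : kripke) (pi : trace) : Prop :=
  exists r : nat -> kS M,
    r 0 \in kI M /\ (forall i, kT M (r i) (r i.+1)) /\
    (forall i, pi i = klab M (r i)).

Definition kmodels (M : kripke) (phi : ltl) : Prop :=
  forall pi, ktrace M pi -> sat pi phi.

Definition CnLTL (X : seq ltl) (phi : ltl) : Prop :=
  forall M : kripke, (forall psi, List.In psi X -> kmodels M psi) -> kmodels M phi.

Record buchi : Type := Buchi {
  bQ : finType;
  bInit : {set bQ};
  bDelta : bQ -> {set AP} -> bQ -> bool;
  bAcc : {set bQ}
}.

Definition accepts (A : buchi) (w : trace) : Prop :=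
  exists r : nat -> bQ A,
    r 0 \in bInit A /\ (forall i, bDelta A (r i) (w i) (r i.+1)) /\
    (forall n, exists m, n <= m /\ r m \in bAcc A).

Definition supp (A : buchi) (phi : ltl) : Prop :=
  forall pi, accepts A pi -> sat pi phi.

(* Excerpt families; a set of formulae is a predicate ltl -> Prop,
   membership in a family is up to extensional equality of sets. *)
Definition E_base (E : ltl -> Prop) : Prop :=
  exists X : seq ltl, forall phi, E phi <-> CnLTL X phi.

Definition E_models (E : ltl -> Prop) : Prop :=
  exists X : seq kripke,
    forall phi, E phi <-> (forall M, List.In M X -> kmodels M phi).

Definition E_Buchi (E : ltl -> Prop) : Prop :=
  exists A : buchi, forall phi, E phi <-> supp A phi.

End LTL.
Arguments LBot {AP}.
Arguments E_base {AP}.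
Arguments E_models {AP}.
Arguments E_Buchi {AP}.

(* Main.v *)
From HB Require Import structures.
Require Import Defs.
From mathcomp Require Import all_boot.
From mathcomp Require Import zify.
From Stdlib Require Import Classical ClassicalEpsilon FunctionalExtensionality.
From Stdlib Require List.


Set Implicit Arguments.
Unset Strict Implicit.
Unset Printing Implicit Defensive.

Arguments LAtom {AP}.
Arguments LNeg {AP}.
Arguments LOr {AP}.
Arguments LNext {AP}.
Arguments LUntil {AP}.
Arguments sat_at {AP}.
Arguments sat {AP}.
Arguments ktrace {AP}.
Arguments kmodels {AP}.
Arguments CnLTL {AP}.
Arguments accepts {AP}.
Arguments supp {AP}.
Arguments kS {AP}.
Arguments kI {AP}.
Arguments kT {AP}.
Arguments klab {AP}.
Arguments bQ {AP}.
Arguments bInit {AP}.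
Arguments bDelta {AP}.
Arguments bAcc {AP}.

Fixpoint ltl_eqb {AP : finType} (a b : ltl AP) : bool :=
  match a, b with
  | LBot, LBot => true
  | LAtom p, LAtom q => p == q
  | LNeg f, LNeg g => ltl_eqb f g
  | LOr f1 f2, LOr g1 g2 => ltl_eqb f1 g1 && ltl_eqb f2 g2
  | LNext f, LNext g => ltl_eqb f g
  | LUntil f1 f2, LUntil g1 g2 => ltl_eqb f1 g1 && ltl_eqb f2 g2
  | _, _ => false
  end.

Lemma ltl_eqP {AP : finType} : Equality.axiom (@ltl_eqb AP).
Proof.
elim=> [|p|f IH|f IHf g IHg|f IH|f IHf g IHg] [|q|f'|f' g'|f'|f' g'] /=;
  try by constructor.
- by apply: (iffP eqP) => [->|[]].
- by apply: (iffP (IH f')) => [->|[]].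
- by apply: (iffP andP) => [[/IHf -> /IHg ->]|[<- <-]]; split; [apply/IHf|apply/IHg].
- by apply: (iffP (IH f')) => [->|[]].
- by apply: (iffP andP) => [[/IHf -> /IHg ->]|[<- <-]]; split; [apply/IHf|apply/IHg].
Qed.

HB.instance Definition _ (AP : finType) := hasDecEq.Build (ltl AP) (@ltl_eqP AP).

Lemma sat_untilE {AP : finType} (pi : trace AP) i f g :
  sat_at pi i (LUntil f g) <->
  sat_at pi i g \/ (sat_at pi i f /\ sat_at pi i.+1 (LUntil f g)).
Proof.
split.
- move=> [k [hik [hg hf]]].
  case: (leqP k i) => hki.
    have -> : i = k by lia.
    by left.
  right; split; first by apply: hf.
  exists k; split => //; split => // j hj hjk; apply: hf => //; lia.
- case=> [hg|[hf [k [hik [hg hfs]]]]]; first by exists i; split => //; split => // j hij hji; lia.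
  exists k; split; first lia; split => // j hij hjk.
  case: (leqP j i) => hji; last by apply: hfs.
  have -> : j = i by lia.
  by [].
Qed.

Definition asb (P : Prop) : bool :=
  if excluded_middle_informative P then true else false.

Lemma asbT (P : Prop) : asb P <-> P.
Proof. by rewrite /asb; case: excluded_middle_informative. Qed.

Lemma asb_iff (P Q : Prop) : (P <-> Q) -> asb P = asb Q.
Proof.
rewrite /asb => h; case: (excluded_middle_informative P) => hp;
  case: (excluded_middle_informative Q) => hq //; exfalso; tauto.
Qed.

Lemma bool_iff (b1 b2 : bool) : (b1 <-> b2) -> b1 = b2.
Proof. by case: b1; case: b2 => // [[h1 h2]]; [have := h1 isT | have := h2 isT]. Qed.

Lemma inP {T : eqType} (x : T) (s : seq T) : List.In x s <-> x \in s.
Proof.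
elim: s => [|y s IH] //=; rewrite in_cons; split.
- by case=> [->|/IH ->]; rewrite ?eqxx ?orbT.
- by case/orP=> [/eqP ->|/IH]; auto.
Qed.

Fixpoint subf {AP : finType} (psi : ltl AP) : seq (ltl AP) :=
  psi :: match psi with
         | LBot | LAtom _ => [::]
         | LNeg f | LNext f => subf f
         | LOr f g | LUntil f g => subf f ++ subf g
         end.

Lemma subf_self {AP : finType} (psi : ltl AP) : psi \in subf psi.
Proof. by case: psi => *; rewrite /= in_cons eqxx. Qed.

Lemma subf_trans {AP : finType} (psi f : ltl AP) :
  f \in subf psi -> {subset subf f <= subf psi}.
Proof.
elim: psi => [|p|g IH|g1 IH1 g2 IH2|g IH|g1 IH1 g2 IH2] /=;
  rewrite in_cons => /orP [/eqP ->|] //;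
  rewrite ?in_nil ?mem_cat // => h x hx; rewrite in_cons.
- by rewrite (IH h x hx) orbT.
- by case/orP: h => h; rewrite mem_cat ?(IH1 h x hx) ?(IH2 h x hx) ?orbT.
- by rewrite (IH h x hx) orbT.
- by case/orP: h => h; rewrite mem_cat ?(IH1 h x hx) ?(IH2 h x hx) ?orbT.
Qed.

Definition cl {AP : finType} (Y : seq (ltl AP)) : seq (ltl AP) :=
  flatten (map subf Y).

Lemma cl_sub {AP : finType} (Y : seq (ltl AP)) psi f :
  psi \in cl Y -> f \in subf psi -> f \in cl Y.
Proof.
move=> /flattenP [s /mapP [chi hchi ->] hpsi] hf.
apply/flattenP; exists (subf chi); first by apply/mapP; exists chi.
exact: (subf_trans hpsi hf).
Qed.

Lemma cl_Y {AP : finType} (Y : seq (ltl AP)) psi : psi \in Y -> psi \in cl Y.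
Proof.
move=> h; apply/flattenP; exists (subf psi); first by apply/mapP; exists psi.
exact: subf_self.
Qed.

Ltac clsub H := apply: (cl_sub H); rewrite /= in_cons ?mem_cat ?subf_self ?orbT.

Lemma cl_neg {AP : finType} (Y : seq (ltl AP)) f : LNeg f \in cl Y -> f \in cl Y.
Proof. by move=> H; clsub H. Qed.
Lemma cl_next {AP : finType} (Y : seq (ltl AP)) f : LNext f \in cl Y -> f \in cl Y.
Proof. by move=> H; clsub H. Qed.
Lemma cl_or1 {AP : finType} (Y : seq (ltl AP)) f g : LOr f g \in cl Y -> f \in cl Y.
Proof. by move=> H; clsub H. Qed.
Lemma cl_or2 {AP : finType} (Y : seq (ltl AP)) f g : LOr f g \in cl Y -> g \in cl Y.
Proof. by move=> H; clsub H. Qed.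
Lemma cl_u1 {AP : finType} (Y : seq (ltl AP)) f g : LUntil f g \in cl Y -> f \in cl Y.
Proof. by move=> H; clsub H. Qed.
Lemma cl_u2 {AP : finType} (Y : seq (ltl AP)) f g : LUntil f g \in cl Y -> g \in cl Y.
Proof. by move=> H; clsub H. Qed.

Definition nY {AP : finType} (Y : seq (ltl AP)) := size (cl Y).
Definition TT {AP : finType} (Y : seq (ltl AP)) := {ffun 'I_(nY Y) -> bool}.
Definition tv {AP : finType} (Y : seq (ltl AP)) (T : TT Y) (psi : ltl AP) : bool :=
  [exists k : 'I_(nY Y), (val k == index psi (cl Y)) && T k].

Arguments tv {AP} Y T psi.
Lemma idx_lt {AP : finType} (Y : seq (ltl AP)) psi : psi \in cl Y -> index psi (cl Y) < nY Y.
Proof. by rewrite /nY index_mem. Qed.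

Lemma tvE {AP : finType} (Y : seq (ltl AP)) (T : TT Y) psi (h : psi \in cl Y) :
  tv Y T psi = T (Ordinal (idx_lt h)).
Proof.
apply/existsP/idP => [[k /andP [/eqP hk hT]]|hT].
- by have -> : Ordinal (idx_lt h) = k by apply: val_inj.
- by exists (Ordinal (idx_lt h)); rewrite /= eqxx.
Qed.

Definition expected {AP : finType} (Y : seq (ltl AP)) (T : TT Y) (a : {set AP}) (T' : TT Y)
  (psi : ltl AP) : bool :=
  match psi with
  | LBot => false
  | LAtom q => q \in a
  | LNeg f => ~~ tv Y T f
  | LOr f g => tv Y T f || tv Y T g
  | LNext f => tv Y T' f
  | LUntil f g => tv Y T g || (tv Y T f && tv Y T' (LUntil f g))
  end.

Arguments expected {AP} Y T a T' psi.
Definition cons {AP : finType} (Y : seq (ltl AP)) (T : TT Y) (a : {set AP}) (T' : TT Y) : bool :=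
  [forall k : 'I_(nY Y), T k == expected Y T a T' (nth LBot (cl Y) k)].

Arguments cons {AP} Y T a T'.
Definition Fc {AP : finType} (Y : seq (ltl AP)) (T : TT Y) (k : nat) : bool :=
  match nth LBot (cl Y) k with
  | LUntil f g => ~~ tv Y T (LUntil f g) || tv Y T g
  | _ => true
  end.

Arguments Fc {AP} Y T k.
Definition step {AP : finType} (Y : seq (ltl AP)) (c : 'I_(nY Y).+1) (T : TT Y) : 'I_(nY Y).+1 :=
  if nat_of_ord c == nY Y then inord 0 else if Fc Y T c then inord c.+1 else c.

Arguments step {AP} Y c T.
Definition QQ {AP : finType} (Y : seq (ltl AP)) := (TT Y * 'I_(nY Y).+1)%type.

Definition aut {AP : finType} (Y : seq (ltl AP)) : buchi AP :=
  @Buchi AP (QQ Y) [set q : QQ Y | (nat_of_ord q.2 == 0) && all (tv Y q.1) Y]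
    (fun q a q' => cons Y q.1 a q'.1 && (q'.2 == step Y q.2 q.1))
    [set q : QQ Y | nat_of_ord q.2 == nY Y].

Lemma consE {AP : finType} (Y : seq (ltl AP)) T a T' psi :
  cons Y T a T' -> psi \in cl Y -> tv Y T psi = expected Y T a T' psi.
Proof.
move=> /forallP hc h; move/eqP: (hc (Ordinal (idx_lt h))).
by rewrite tvE /= nth_index.
Qed.

Lemma FcE {AP : finType} (Y : seq (ltl AP)) T f g (h : LUntil f g \in cl Y) :
  Fc Y T (index (LUntil f g) (cl Y)) = ~~ tv Y T (LUntil f g) || tv Y T g.
Proof. by rewrite /Fc nth_index. Qed.

Lemma stepv {AP : finType} (Y : seq (ltl AP)) c T :
  nat_of_ord (step Y c T) = if nat_of_ord c == nY Y then 0 else if Fc Y T c then (nat_of_ord c).+1 else nat_of_ord c.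
Proof.
rewrite /step; case: eqP => [_|hn]; first by rewrite inordK.
case: ifP => // _; rewrite inordK //; have := ltn_ord c; lia.
Qed.

Lemma cnt_lemma {AP : finType} (Y : seq (ltl AP)) (T : nat -> TT Y) (c : nat -> 'I_(nY Y).+1)
  (hc : forall m, c m.+1 = step Y (c m) (T m)) k :
  forall d a, c a <= k < c (a + d) -> exists m, a <= m < a + d /\ nat_of_ord (c m) = k /\ Fc Y (T m) k.
Proof.
elim=> [|d IH] a.
- rewrite addn0 => h; lia.
- rewrite addnS hc stepv => /andP [h1 h2].
  move: h2; case: eqP => [_|hn]; first by [].
  case hF: (Fc Y (T (a + d)) (c (a + d))) => h2.
  + case: (eqVneq (nat_of_ord (c (a + d))) k) => [hk|hk].
      by exists (a + d); split; [lia|split => //; rewrite -hk].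
    have [|m [hm1 hm2]] := IH a; first by apply/andP; split => //; lia.
    by exists m; split => //; lia.
  + have [|m [hm1 hm2]] := IH a; first by apply/andP; split.
    by exists m; split => //; lia.
Qed.

Lemma fulfill {AP : finType} (Y : seq (ltl AP)) (T : nat -> TT Y) (c : nat -> 'I_(nY Y).+1)
  (hc : forall m, c m.+1 = step Y (c m) (T m))
  (hacc : forall n, exists m, n <= m /\ nat_of_ord (c m) = nY Y) k :
  k < nY Y -> forall a, exists m, a <= m /\ Fc Y (T m) k.
Proof.
move=> hk a.
have [m1 [hm1 hc1]] := hacc a.
have [m2 [hm2 hc2]] := hacc m1.+1.
have h0 : nat_of_ord (c m1.+1) = 0 by rewrite hc stepv hc1 eqxx.
have [|m [hm hm3]] := @cnt_lemma _ _ _ _ hc k (m2 - m1.+1) m1.+1.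
  by rewrite subnKC // h0 hc2; apply/andP.
by exists m; case: hm3 => _ hF; split => //; move/andP: hm => [hm _]; lia.
Qed.

Lemma until_fwd {AP : finType} (Y : seq (ltl AP)) (w : trace AP) (T : nat -> TT Y)
  (hcons : forall i, cons Y (T i) (w i) (T i.+1)) f g (h : LUntil f g \in cl Y) :
  forall d i, tv Y (T i) (LUntil f g) -> Fc Y (T (i + d)) (index (LUntil f g) (cl Y)) ->
  exists k, i <= k /\ tv Y (T k) g /\ forall j, i <= j -> j < k -> tv Y (T j) f.
Proof.
elim=> [|d IH] i hU.
- rewrite addn0 (FcE _ h) hU /= => hg; exists i; split => //; split => // j h1 h2; lia.
- move=> hF; move: hU; rewrite (consE (hcons i) h) /= => /orP [hg|/andP [hf hU']].
    exists i; split => //; split => // j h1 h2; lia.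
  have [|k [hk1 [hk2 hk3]]] := IH i.+1 hU'; first by rewrite addSnnS.
  exists k; split; first lia; split => // j h1 h2.
  case: (leqP j i) => hji; last by apply: hk3.
  by have -> : j = i by lia.
Qed.

Lemma until_bwd {AP : finType} (Y : seq (ltl AP)) (w : trace AP) (T : nat -> TT Y)
  (hcons : forall i, cons Y (T i) (w i) (T i.+1)) f g (h : LUntil f g \in cl Y) :
  forall d i, tv Y (T (i + d)) g -> (forall j, i <= j -> j < i + d -> tv Y (T j) f) ->
  tv Y (T i) (LUntil f g).
Proof.
elim=> [|d IH] i hg hf; rewrite (consE (hcons i) h) /=.
- by move: hg; rewrite addn0 => ->.
- apply/orP; right; apply/andP; split; first by apply: hf; lia.
  apply: IH; first by rewrite addSnnS.
  move=> j h1 h2; apply: hf; lia.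
Qed.

Lemma aut_sound_cl {AP : finType} (Y : seq (ltl AP)) (w : trace AP) (T : nat -> TT Y)
  (c : nat -> 'I_(nY Y).+1)
  (hcons : forall i, cons Y (T i) (w i) (T i.+1))
  (hc : forall m, c m.+1 = step Y (c m) (T m))
  (hacc : forall n, exists m, n <= m /\ nat_of_ord (c m) = nY Y) :
  forall psi, psi \in cl Y -> forall i, tv Y (T i) psi <-> sat_at w i psi.
Proof.
elim=> [|p|f IH|f IHf g IHg|f IH|f IHf g IHg] h i; last first.
- have hf := cl_u1 h; have hg := cl_u2 h.
  split.
  + move=> hU.
    have [m [hm hF]] := fulfill hc hacc (idx_lt h) i.
    rewrite -(subnKC hm) in hF.
    have [k [hk1 [hk2 hk3]]] := until_fwd hcons h hU hF.
    exists k; split => //; split; first by apply/(IHg hg).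
    by move=> j h1 h2; apply/(IHf hf); apply: hk3.
  + move=> [k [hk1 [hk2 hk3]]].
    apply: (@until_bwd _ _ _ _ hcons _ _ h (k - i)); first by rewrite subnKC //; apply/(IHg hg).
    by move=> j h1 h2; apply/(IHf hf); apply: hk3; lia.
all: rewrite (consE (hcons i) h) /=.
- exact: IH (cl_next h) i.+1.
- have hf := cl_or1 h; have hg := cl_or2 h; split.
  + by case/orP => [/(IHf hf)|/(IHg hg)]; auto.
  + by case=> [/(IHf hf) ->|/(IHg hg) ->]; rewrite ?orbT.
- have hf := cl_neg h; split.
  + by move=> /negP hn hs; apply: hn; apply/(IH hf).
  + by move=> hn; apply/negP => hs; apply: hn; apply/(IH hf).
- by [].
- by split.
Qed.

Lemma aut_sound {AP : finType} (Y : seq (ltl AP)) (w : trace AP) :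
  accepts (aut Y) w -> forall psi, psi \in Y -> sat w psi.
Proof.
move=> [r [hr0 [hd hacc]]] psi hpsi.
have hcons : forall i, cons Y (r i).1 (w i) (r i.+1).1.
  by move=> i; case/andP: (hd i).
have hc : forall m, (r m.+1).2 = step Y (r m).2 (r m).1.
  by move=> i; case/andP: (hd i) => _ /eqP.
have hacc' : forall n, exists m, n <= m /\ nat_of_ord (r m).2 = nY Y.
  by move=> n; have [m [h1 h2]] := hacc n; exists m; split => //; move: h2; rewrite inE => /eqP.
apply/(aut_sound_cl hcons hc hacc' (cl_Y hpsi)).
by move: hr0; rewrite inE => /andP [_ /allP]; apply.
Qed.


Lemma asb_not (P : Prop) : asb (~ P) = ~~ asb P.
Proof.
rewrite /asb; case: (excluded_middle_informative (~ P)) => h1;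
  case: (excluded_middle_informative P) => h2 //; exfalso; tauto.
Qed.
Lemma asb_or (P Q : Prop) : asb (P \/ Q) = asb P || asb Q.
Proof.
rewrite /asb; case: (excluded_middle_informative (P \/ Q)) => h1;
  case: (excluded_middle_informative P) => h2 //;
  case: (excluded_middle_informative Q) => h3 //; exfalso; tauto.
Qed.
Lemma asb_and (P Q : Prop) : asb (P /\ Q) = asb P && asb Q.
Proof.
rewrite /asb; case: (excluded_middle_informative (P /\ Q)) => h1;
  case: (excluded_middle_informative P) => h2 //;
  case: (excluded_middle_informative Q) => h3 //; exfalso; tauto.
Qed.
Lemma asbF : asb False = false.
Proof. by rewrite /asb; case: excluded_middle_informative. Qed.
Lemma asb_bool (b : bool) : asb b = b.
Proof. by rewrite /asb; case: excluded_middle_informative; case: b. Qed.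

Definition Ttrue {AP : finType} (Y : seq (ltl AP)) (w : trace AP) (i : nat) : TT Y :=
  [ffun k : 'I_(nY Y) => asb (sat_at w i (nth LBot (cl Y) k))].

Lemma tvT {AP : finType} (Y : seq (ltl AP)) w i psi :
  psi \in cl Y -> tv Y (Ttrue Y w i) psi = asb (sat_at w i psi).
Proof. by move=> h; rewrite (tvE _ h) ffunE /= nth_index. Qed.

Lemma cons_true {AP : finType} (Y : seq (ltl AP)) w i :
  cons Y (Ttrue Y w i) (w i) (Ttrue Y w i.+1).
Proof.
apply/forallP => k; rewrite ffunE; apply/eqP.
have : nth LBot (cl Y) k \in cl Y by apply: mem_nth.
case: (nth LBot (cl Y) k) => [|p|f|f g|f|f g] h /=.
- exact: asbF.
- exact: asb_bool.
- by rewrite asb_not tvT // (cl_neg h).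
- by rewrite asb_or !tvT // ?(cl_or1 h) ?(cl_or2 h).
- by rewrite tvT // (cl_next h).
- rewrite (asb_iff (sat_untilE _ _ _ _)) asb_or asb_and !tvT //.
  + exact: (cl_u1 h).
  + exact: (cl_u2 h).
Qed.

Fixpoint cntr {AP : finType} (Y : seq (ltl AP)) (w : trace AP) (m : nat) : 'I_(nY Y).+1 :=
  match m with
  | 0 => inord 0
  | m'.+1 => step Y (cntr Y w m') (Ttrue Y w m')
  end.

Lemma fulfill_true {AP : finType} (Y : seq (ltl AP)) w k a :
  exists m, a <= m /\ Fc Y (Ttrue Y w m) k.
Proof.
rewrite /Fc; case: (ltnP k (nY Y)) => hk; last first.
  by exists a; rewrite nth_default.
have : nth LBot (cl Y) k \in cl Y by apply: mem_nth.
case: (nth LBot (cl Y) k) => [|p|f|f g|f|f g] h; try by exists a.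
rewrite /= in h.
case: (classic (sat_at w a (LUntil f g))) => hs.
- case: hs => k0 [hk0 [hg _]]; exists k0; split => //.
  by rewrite (tvT _ _ (cl_u2 h)); apply/orP; right; apply/asbT.
- exists a; split => //; rewrite (tvT _ _ h); apply/orP; left; apply/negP => /asbT.
  exact: hs.
Qed.

Lemma climb {AP : finType} (Y : seq (ltl AP)) w :
  forall d a, cntr Y w a < nY Y -> Fc Y (Ttrue Y w (a + d)) (cntr Y w a) ->
  exists m, a < m /\ nat_of_ord (cntr Y w m) = (cntr Y w a).+1.
Proof.
elim=> [|d IH] a ha.
- rewrite addn0 => hF; exists a.+1; split => //=.
  by rewrite stepv hF; case: eqP => // he; rewrite he ltnn in ha.
- move=> hF.
  case hF0: (Fc Y (Ttrue Y w a) (cntr Y w a)).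
    exists a.+1; split => //=.
    by rewrite stepv hF0; case: eqP => // he; rewrite he ltnn in ha.
  have e : nat_of_ord (cntr Y w a.+1) = cntr Y w a.
    by rewrite /= stepv hF0; case: eqP => // he; rewrite he ltnn in ha.
  have h1 : cntr Y w a.+1 < nY Y by rewrite e.
  have h2 : Fc Y (Ttrue Y w (a.+1 + d)) (cntr Y w a.+1) by rewrite e addSnnS.
  have [m [hm1 hm2]] := IH a.+1 h1 h2.
  by exists m; split; [lia | rewrite hm2 e].
Qed.

Lemma reach {AP : finType} (Y : seq (ltl AP)) w :
  forall e a, nY Y - cntr Y w a <= e -> exists m, a <= m /\ nat_of_ord (cntr Y w m) = nY Y.
Proof.
elim=> [|e IH] a ha.
- exists a; split => //; have := ltn_ord (cntr Y w a); lia.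
- case: (eqVneq (nat_of_ord (cntr Y w a)) (nY Y)) => [he|hne].
    by exists a.
  have hlt : cntr Y w a < nY Y by have := ltn_ord (cntr Y w a); lia.
  have [m0 [hm0 hF]] := fulfill_true Y w (cntr Y w a) a.
  rewrite -(subnKC hm0) in hF.
  have [m [hm1 hm2]] := climb hlt hF.
  have [|m' [hm'1 hm'2]] := IH m; first by lia.
  by exists m'; split => //; lia.
Qed.

Lemma aut_complete {AP : finType} (Y : seq (ltl AP)) (w : trace AP) :
  (forall psi, psi \in Y -> sat w psi) -> accepts (aut Y) w.
Proof.
move=> hY.
exists (fun m => (Ttrue Y w m, cntr Y w m)); split; [|split].
- rewrite inE /= inordK //; apply/allP => psi hpsi.
  by rewrite tvT ?(cl_Y hpsi) //; apply/asbT; apply: hY.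
- by move=> i; rewrite /= cons_true eqxx.
- move=> n; have [m [h1 h2]] := @reach _ Y w (nY Y) n (leq_subr _ _).
  by exists m; split => //; rewrite inE /= h2.
Qed.


Fixpoint lg (i j m : nat) : nat :=
  match m with
  | 0 => 0
  | m'.+1 => if lg i j m' == j then i else (lg i j m').+1
  end.

Lemma lg_le i j m : i <= j -> lg i j m <= j.
Proof.
move=> hij; elim: m => [|m IH] //=.
case: eqP => // hne; lia.
Qed.

Lemma lg_step i j (Q : nat -> nat -> Prop) :
  (forall k, Q k k.+1) -> Q j i -> forall m, Q (lg i j m) (lg i j m.+1).
Proof. by move=> h1 h2 m /=; case: eqP => [->|_]. Qed.

Lemma lg_id i j m : m <= j -> lg i j m = m.
Proof.
elim: m => [|m IH] //= hm.
rewrite IH; last lia.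
by case: eqP => // he; lia.
Qed.

Lemma lg_period i j t : i <= j -> lg i j (i + t + (j.+1 - i)) = lg i j (i + t).
Proof.
move=> hij; elim: t => [|t IH].
- rewrite addn0 (@lg_id i j i hij).
  have -> : i + (j.+1 - i) = j.+1 by lia.
  by rewrite /= (@lg_id i j j (leqnn j)) eqxx.
- have -> : i + t.+1 + (j.+1 - i) = (i + t + (j.+1 - i)).+1 by lia.
  by rewrite addnS /= IH.
Qed.

Lemma lg_mult i j q : i <= j -> lg i j (i + q * (j.+1 - i)) = i.
Proof.
move=> hij; elim: q => [|q IH].
- by rewrite mul0n addn0 lg_id.
- have -> : i + q.+1 * (j.+1 - i) = i + (q * (j.+1 - i)) + (j.+1 - i) by rewrite mulSn; lia.
  by rewrite lg_period.
Qed.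

Lemma lg_inf i j : i <= j -> forall n, exists m, n <= m /\ lg i j m = i.
Proof.
move=> hij n; exists (i + n * (j.+1 - i)); split; last exact: lg_mult.
have hp : 0 < j.+1 - i by lia.
have := leq_pmulr n hp; lia.
Qed.

Lemma pigeon (S : finType) (r : nat -> S) : exists a b, a < b <= #|S| /\ r a = r b.
Proof.
pose f := fun k : 'I_#|S|.+1 => r k.
case: (boolP [exists x, exists y, (f x == f y) && (x != y)]).
- move=> /existsP [x /existsP [y /andP [/eqP hf hne]]].
  have hne' : nat_of_ord x != nat_of_ord y by [].
  case: (ltngtP x y) hne' => // hxy _.
  + by exists x, y; split => //; apply/andP; split => //; rewrite -ltnS.
  + by exists y, x; split => //; apply/andP; split => //; rewrite -ltnS.
- move=> hn; exfalso.
  have hinj : injective f.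
    move=> x y hxy; apply/eqP; apply: contraNT hn => hne.
    by apply/existsP; exists x; apply/existsP; exists y; rewrite hxy eqxx hne.
  by have := leq_card f hinj; rewrite card_ord ltnn.
Qed.

Lemma buchi_lasso {AP : finType} (A : buchi AP) (pi : trace AP) :
  accepts A pi -> exists i j, i <= j /\ accepts A (fun m => pi (lg i j m)).
Proof.
move=> [r [h0 [hd hacc]]].
pose f := fun n => proj1_sig (constructive_indefinite_description _ (hacc n)).
have hf : forall n, n <= f n /\ r (f n) \in bAcc A.
  by move=> n; rewrite /f; case: constructive_indefinite_description.
pose q := fix q k := match k with 0 => f 0 | k'.+1 => f (q k').+1 end.
have hq : forall k, q k < q k.+1 by move=> k /=; have [h _] := hf (q k).+1.
have hqm : forall k1 k2, k1 < k2 -> q k1 < q k2.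
  move=> k1; elim=> [|k2 IH] //; rewrite ltnS leq_eqVlt => /orP [/eqP ->|h].
  - exact: hq.
  - exact: ltn_trans (IH h) (hq k2).
have [a [b [/andP [hab _] he]]] := pigeon (fun k => r (q k)).
have hab' := hqm _ _ hab.
exists (q a), (q b).-1; split; first lia.
have hjb : (q b).-1.+1 = q b by lia.
exists (fun m => r (lg (q a) (q b).-1 m)); split; [|split].
- exact: h0.
- apply: (lg_step (Q := fun k l => bDelta A (r k) (pi k) (r l))) => //.
  by have := hd (q b).-1; rewrite hjb /= -he.
- move=> n; have hle : q a <= (q b).-1 by lia.
  have [m [hm1 hm2]] := @lg_inf (q a) (q b).-1 hle n.
  exists m; split => //; rewrite hm2.
  by case: (a) => [|a'] /=; [case: (hf 0) | case: (hf (q a').+1)].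
Qed.


Lemma sat_ext {AP : finType} (pi sigma : trace AP) psi :
  (forall m, pi m = sigma m) -> sat pi psi <-> sat sigma psi.
Proof. by move=> h; have -> : pi = sigma by apply: functional_extensionality. Qed.

Definition lrel (i j : nat) : rel 'I_j.+1 :=
  fun a b => nat_of_ord b == (if nat_of_ord a == j then i else (nat_of_ord a).+1).

Arguments lrel : clear implicits.

Lemma lasso_ne j : [set (@ord0 j)] != set0.
Proof. by apply/set0Pn; exists ord0; rewrite set11. Qed.

Lemma lasso_tot i j : i <= j -> forall s : 'I_j.+1, exists s', lrel i j s s'.
Proof.
move=> hij s; exists (inord (if nat_of_ord s == j then i else (nat_of_ord s).+1)).
rewrite /lrel inordK //; case: eqP => // hne; have := ltn_ord s; lia.
Qed.

Definition lassoK {AP : finType} (i j : nat) (hij : i <= j) (lab : nat -> {set AP}) : kripke AP :=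
  @Kripke AP 'I_j.+1 [set ord0] (lrel i j) (fun a => lab (nat_of_ord a)) (lasso_ne j)
    (lasso_tot hij).

Lemma lassoK_trace {AP : finType} i j (hij : i <= j) (lab : nat -> {set AP}) sigma :
  ktrace (lassoK hij lab) sigma <-> forall m, sigma m = lab (lg i j m).
Proof.
split.
- move=> [rho [h0 [hT hl]]].
  have hv : forall m, nat_of_ord (rho m) = lg i j m.
    elim=> [|m IH] /=; first by move: h0; rewrite /= inE => /eqP ->.
    by move/eqP: (hT m) => ->; rewrite IH.
  by move=> m; rewrite hl /= hv.
- move=> hs; exists (fun m => inord (lg i j m)); split; [|split].
  + by rewrite /= inE; apply/eqP; apply: val_inj; rewrite /= inordK.
  + move=> m; rewrite /= /lrel !inordK //; rewrite ltnS; [exact: lg_le|exact: (@lg_le i j m.+1 hij)].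
  + by move=> m; rewrite hs /= inordK // ltnS lg_le.
Qed.

Lemma lassoK_models {AP : finType} i j (hij : i <= j) (lab : nat -> {set AP}) psi :
  kmodels (lassoK hij lab) psi <-> sat (fun m => lab (lg i j m)) psi.
Proof.
split.
- by move=> h; apply: h; apply/lassoK_trace.
- move=> h sigma /lassoK_trace hs; exact/(sat_ext psi hs).
Qed.

Lemma base_buchi {AP : finType} (X : seq (ltl AP)) phi :
  CnLTL X phi <-> supp (aut X) phi.
Proof.
split.
- move=> hC pi hacc; apply: NNPP => hn.
  have hacc' : accepts (aut (LNeg phi :: X)) pi.
    apply: aut_complete => psi; rewrite in_cons => /orP [/eqP ->|hpsi] //.
    exact: aut_sound hacc psi hpsi.
  have [i [j [hij hacc2]]] := buchi_lasso hacc'.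
  have hs := aut_sound hacc2.
  have hM : kmodels (lassoK hij pi) phi.
    apply: hC => psi /inP hpsi; apply/lassoK_models.
    by apply: hs; rewrite in_cons hpsi orbT.
  move/lassoK_models: hM => hM.
  by have := hs (LNeg phi); rewrite in_cons eqxx => /(_ isT).
- move=> hs M HM pi hpi; apply: hs; apply: aut_complete => psi hpsi.
  by apply: (HM psi) => //; apply/inP.
Qed.

Definition aut1 {AP : finType} (M : kripke AP) : buchi AP :=
  @Buchi AP (kS M) (kI M) (fun q a q' => kT M q q' && (a == klab M q)) setT.

Definition autU {AP : finType} (A1 A2 : buchi AP) : buchi AP :=
  @Buchi AP (bQ A1 + bQ A2)%type
    [set q | match q with inl x => x \in bInit A1 | inr y => y \in bInit A2 end]
    (fun q a q' => match q, q' with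
                   | inl x, inl x' => bDelta A1 x a x'
                   | inr y, inr y' => bDelta A2 y a y'
                   | _, _ => false end)
    [set q | match q with inl x => x \in bAcc A1 | inr y => y \in bAcc A2 end].

Definition aut0 {AP : finType} : buchi AP :=
  @Buchi AP unit set0 (fun _ _ _ => true) set0.

Fixpoint autK {AP : finType} (X : seq (kripke AP)) : buchi AP :=
  match X with
  | [::] => aut0
  | M :: X' => autU (aut1 M) (autK X')
  end.

Lemma acc1 {AP : finType} (M : kripke AP) w : accepts (aut1 M) w <-> ktrace M w.
Proof.
split.
- move=> [r [h0 [hd _]]]; exists r; split => //; split => i; case/andP: (hd i) => // _ /eqP //.
- move=> [r [h0 [hT hl]]]; exists r; split => //; split.
  + by move=> i; rewrite /= hT hl eqxx.
  + by move=> n; exists n; rewrite inE.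
Qed.

Lemma acc0 {AP : finType} w : ~ accepts (@aut0 AP) w.
Proof. by move=> [r [h0 _]]; rewrite inE in h0. Qed.

Lemma accU {AP : finType} (A1 A2 : buchi AP) w :
  accepts (autU A1 A2) w <-> accepts A1 w \/ accepts A2 w.
Proof.
split.
- move=> [r [h0 [hd hacc]]].
  case e0: (r 0) h0 => [x0|y0] h0.
  + left.
    pose r1 := fun m => match r m with inl x => x | inr _ => x0 end.
    have hr : forall m, r m = inl (r1 m).
      elim=> [|m IH]; first by rewrite /r1 e0.
      have := hd m; rewrite IH /r1; case: (r m.+1) => //.
    exists r1; split; [|split].
    * by move: h0; rewrite /r1 e0 inE.
    * by move=> i; have := hd i; rewrite !hr.
    * by move=> n; have [m [h1 h2]] := hacc n; exists m; move: h2; rewrite hr inE.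
  + right.
    pose r2 := fun m => match r m with inr y => y | inl _ => y0 end.
    have hr : forall m, r m = inr (r2 m).
      elim=> [|m IH]; first by rewrite /r2 e0.
      have := hd m; rewrite IH /r2; case: (r m.+1) => //.
    exists r2; split; [|split].
    * by move: h0; rewrite /r2 e0 inE.
    * by move=> i; have := hd i; rewrite !hr.
    * by move=> n; have [m [h1 h2]] := hacc n; exists m; move: h2; rewrite hr inE.
- case=> [[r [h0 [hd hacc]]]|[r [h0 [hd hacc]]]].
  + exists (fun m => inl (r m)); split; [by rewrite inE|split] => //.
    by move=> n; have [m [h1 h2]] := hacc n; exists m; rewrite inE.
  + exists (fun m => inr (r m)); split; [by rewrite inE|split] => //.
    by move=> n; have [m [h1 h2]] := hacc n; exists m; rewrite inE.
Qed.

Lemma accK {AP : finType} (X : seq (kripke AP)) w :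
  accepts (autK X) w <-> exists M, List.In M X /\ ktrace M w.
Proof.
elim: X => [|M X IH] /=.
- by split => [/acc0 //|[M [[] _]]].
- rewrite accU acc1 IH; split.
  + by case=> [h|[M' [h1 h2]]]; [exists M; split; [left|] | exists M'; split; [right|]].
  + by case=> M' [[<-|h1] h2]; [left | right; exists M'].
Qed.

Lemma models_buchi {AP : finType} (X : seq (kripke AP)) phi :
  (forall M, List.In M X -> kmodels M phi) <-> supp (autK X) phi.
Proof.
split.
- by move=> h pi /accK [M [h1 h2]]; apply: (h M).
- by move=> h M hM pi hpi; apply: h; apply/accK; exists M.
Qed.


Definition u {AP : finType} (p : AP) (k : nat) : trace AP :=
  fun m => if m == k then [set p] else set0.

Definition edelta {AP : finType} (p : AP) (q : option bool) (a : {set AP}) (q' : option bool) : bool :=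
  match q, q' with
  | Some b, Some b' => (a == set0) && (b' == ~~ b)
  | Some b, None => (~~ b) && (a == [set p])
  | None, None => a == set0
  | None, Some _ => false
  end.

Definition Aeven {AP : finType} (p : AP) : buchi AP :=
  @Buchi AP (option bool) [set Some false] (edelta p) [set None].

Lemma even_acc {AP : finType} (p : AP) pi :
  accepts (Aeven p) pi <-> exists n, forall m, pi m = u p (2 * n) m.
Proof.
split.
- move=> [r [h0 [hd hacc]]].
  rewrite /= inE in h0; move/eqP: h0 => h0.
  have hB : forall m, r m = None -> r m.+1 = None /\ pi m = set0.
    move=> m hm; have := hd m; rewrite /= hm /edelta.
    by case: (r m.+1) => // /eqP.
  have hA : forall m, r m <> None -> r m = Some (odd m) /\ forall k, k < m -> pi k = set0.
    elim=> [|m IH] hm; first by rewrite h0; split.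
    have := hd m; rewrite /edelta.
    case em: (r m) => [b|] //; last by case: (r m.+1) hm.
    case em1: (r m.+1) hm => [b'|] // _ /andP [/eqP hp /eqP hb].
    have hne : r m <> None by rewrite em.
    have [IH1 IH2] := IH hne.
    move: IH1; rewrite em => [[eb]].
    rewrite hb eb /=; split => // k hk.
    case: (ltnP k m) => hkm; first exact: IH2.
    by have -> : k = m by lia.
  have hex : exists m, r m == None.
    by have [m [_ hm]] := hacc 0; exists m; move: hm; rewrite inE.
  case: (ex_minnP hex) => n0 /eqP hn0 hmin.
  have hn0pos : n0 != 0 by apply/eqP => e; move: hn0; rewrite e h0.
  have hk : r n0.-1 <> None.
    move=> e; have := hmin _ (introT eqP e); lia.
  have [hA1 hA2] := hA _ hk.
  have hpos : 0 < n0 by rewrite lt0n.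
  have := hd n0.-1; rewrite hA1 (prednK (hpos : 0 < n0)) hn0 /= => /andP [hodd /eqP hp].
  have hafter : forall d, r (n0 + d) = None /\ pi (n0 + d) = set0.
    elim=> [|d [IH1 IH2]]; first by rewrite addn0; split => //; exact: (hB _ hn0).2.
    rewrite addnS; have [h1 _] := hB _ IH1; split => //; exact: (hB _ h1).2.
  exists (n0.-1)./2.
  have e2 : 2 * (n0.-1)./2 = n0.-1.
    by have := odd_double_half n0.-1; rewrite (negbTE hodd) add0n mul2n.
  move=> m; rewrite e2 /u.
  case: (ltngtP m n0.-1) => [hm|hm|->]; last exact: hp.
  + by rewrite hA2.
  + have -> : m = n0 + (m - n0) by lia.
    by rewrite (hafter _).2.
- move=> [n hn].
  exists (fun m => if m <= 2 * n then Some (odd m) else None); split; [|split].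
  + by rewrite /= inE.
  + move=> m; rewrite /= /edelta hn /u.
    case: (ltngtP m (2 * n)) => hm.
    * by rewrite !eqxx.
    * by rewrite eqxx.
    * by rewrite hm mul2n odd_double eqxx.
  + move=> k; exists (k + 2 * n + 1); split; first lia.
    have -> : (k + 2 * n + 1 <= 2 * n) = false by lia.
    by rewrite inE.
Qed.

Lemma even_supp {AP : finType} (p : AP) phi :
  supp (Aeven p) phi <-> forall n, sat (u p (2 * n)) phi.
Proof.
split.
- by move=> h n; apply: h; apply/even_acc; exists n.
- move=> h pi /even_acc [n hn]; exact/(sat_ext phi hn).
Qed.

Lemma shift1 {AP : finType} (pi sigma : trace AP) :
  (forall m, pi m.+1 = sigma m) -> forall f i, sat_at pi i.+1 f <-> sat_at sigma i f.
Proof.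
move=> hs; elim=> [|q|f IH|f IHf g IHg|f IH|f IHf g IHg] i /=.
- by [].
- by rewrite hs.
- by rewrite IH.
- by rewrite IHf IHg.
- exact: IH.
- split.
  + move=> [k [hk [hg hf]]]; exists k.-1.
    have ek : k = k.-1.+1 by lia.
    split; first lia; split; first by apply/IHg; rewrite -ek.
    move=> j h1 h2; apply/IHf; apply: hf; lia.
  + move=> [k [hk [hg hf]]]; exists k.+1; split => //; split; first by apply/IHg.
    move=> j h1 h2; have ej : j = j.-1.+1 by lia.
    rewrite ej; apply/IHf; apply: hf; lia.
Qed.

Lemma u_shift {AP : finType} (p : AP) k m : u p k.+1 m.+1 = u p k m.
Proof. by rewrite /u eqSS. Qed.

Lemma tX {AP : finType} (p : AP) k f : sat (u p k.+1) (LNext f) <-> sat (u p k) f.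
Proof. exact: (shift1 (@u_shift _ p k) f 0). Qed.

Lemma tU {AP : finType} (p : AP) k f g :
  sat (u p k.+1) (LUntil f g) <->
  sat (u p k.+1) g \/ (sat (u p k.+1) f /\ sat (u p k) (LUntil f g)).
Proof.
rewrite /sat sat_untilE (shift1 (@u_shift _ p k) (LUntil f g) 0); tauto.
Qed.

Lemma tA {AP : finType} (p : AP) k q : ~ sat (u p k.+1) (LAtom q).
Proof. by rewrite /sat /= /u /= in_set0. Qed.

Lemma stab {AP : finType} (p : AP) psi :
  exists N, forall k, N <= k -> (sat (u p k) psi <-> sat (u p N) psi).
Proof.
elim: psi => [|q|f [N IH]|f [Nf IHf] g [Ng IHg]|f [N IH]|f [Nf IHf] g [Ng IHg]].
- by exists 0.
- exists 1 => k hk; have ek : k = k.-1.+1 by lia.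
  by rewrite ek; split => h; exfalso; apply: tA h.
- exists N => k hk; rewrite /sat /=; have := IH k hk; rewrite /sat; tauto.
- exists (maxn Nf Ng) => k hk; rewrite /sat /=.
  have h1 := IHf k (leq_trans (leq_maxl _ _) hk).
  have h2 := IHf (maxn Nf Ng) (leq_maxl _ _).
  have h3 := IHg k (leq_trans (leq_maxr _ _) hk).
  have h4 := IHg (maxn Nf Ng) (leq_maxr _ _).
  rewrite /sat in h1 h2 h3 h4; tauto.
- exists N.+1 => k hk; have ek : k = k.-1.+1 by lia.
  rewrite ek !tX (IH k.-1) //; lia.
- set M0 := maxn Nf Ng.
  have hf : forall k, M0 <= k -> (sat (u p k) f <-> sat (u p M0) f).
    move=> k hk; rewrite (IHf k) ?(IHf M0) //; [exact: leq_maxl|exact: leq_trans (leq_maxl _ _) hk].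
  have hg : forall k, M0 <= k -> (sat (u p k) g <-> sat (u p M0) g).
    move=> k hk; rewrite (IHg k) ?(IHg M0) //; [exact: leq_maxr|exact: leq_trans (leq_maxr _ _) hk].
  exists M0.+1.
  have hd : forall d, sat (u p (M0.+1 + d)) (LUntil f g) <-> sat (u p M0.+1) (LUntil f g).
    elim=> [|d IH]; first by rewrite addn0.
    rewrite addnS tU IH (hf (M0.+1 + d).+1) ?(hg (M0.+1 + d).+1); try lia.
    rewrite tU (hf M0.+1) ?(hg M0.+1); try lia.
    tauto.
  move=> k hk; have -> : k = M0.+1 + (k - M0.+1) by lia.
  exact: hd.
Qed.


Lemma stab_list {AP : finType} (p : AP) (X : seq (ltl AP)) :
  exists N, forall psi, List.In psi X -> forall k, N <= k -> (sat (u p k) psi <-> sat (u p N) psi).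
Proof.
elim: X => [|psi X [N IH]]; first by exists 0.
have [Np hp] := stab p psi.
exists (maxn Np N) => chi [<-|hchi] k hk.
- rewrite (hp k) ?(hp (maxn Np N)) //; [exact: leq_maxl|exact: leq_trans (leq_maxl _ _) hk].
- rewrite (IH chi hchi k) ?(IH chi hchi (maxn Np N)) //;
    [exact: leq_maxr|exact: leq_trans (leq_maxr _ _) hk].
Qed.

Fixpoint nextn {AP : finType} (m : nat) (f : ltl AP) : ltl AP :=
  match m with 0 => f | m'.+1 => LNext (nextn m' f) end.

Lemma sat_nextn {AP : finType} (pi : trace AP) m f :
  forall i, sat_at pi i (nextn m f) <-> sat_at pi (i + m) f.
Proof.
elim: m => [|m IH] i /=; first by rewrite addn0.
by rewrite IH addSnnS.
Qed.

Fixpoint within {AP : finType} (p : AP) (m : nat) : ltl AP :=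
  match m with 0 => LBot | m'.+1 => LOr (LAtom p) (LNext (within p m')) end.

Lemma sat_within {AP : finType} (p : AP) (pi : trace AP) m :
  forall i, sat_at pi i (within p m) <-> exists k, k < m /\ p \in pi (i + k).
Proof.
elim: m => [|m IH] i /=.
- by split => // [[k []]].
- rewrite IH; split.
  + case=> [h|[k [hk h]]]; first by exists 0; rewrite addn0.
    by exists k.+1; split => //; rewrite -addSnnS.
  + case=> [[|k] [hk h]]; first by left; rewrite addn0 in h.
    by right; exists k; split => //; rewrite addSnnS.
Qed.

Definition Fp {AP : finType} (p : AP) : ltl AP := LUntil (LNeg LBot) (LAtom p).

Lemma sat_Fp {AP : finType} (p : AP) (pi : trace AP) : sat pi (Fp p) <-> exists k, p \in pi k.
Proof.
split.
- by move=> [k [_ [h _]]]; exists k.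
- by move=> [k h]; exists k; split => //; split => // j _ _ /=.
Qed.

Lemma lg_same j m : lg j j m = minn m j.
Proof.
elim: m => [|m IH] /=; first by rewrite min0n.
rewrite IH; case: eqP => e; lia.
Qed.

Fixpoint bnd {AP : finType} (X : seq (kripke AP)) : nat :=
  match X with [::] => 0 | M :: X' => #|kS M| + bnd X' end.

Lemma bnd_le {AP : finType} (X : seq (kripke AP)) M : List.In M X -> #|kS M| <= bnd X.
Proof.
elim: X => [|M' X IH] //= [<-|h]; first exact: leq_addr.
exact: leq_trans (IH h) (leq_addl _ _).
Qed.

Theorem mainTheorem15 (AP : finType) (HAP : 0 < #|AP|) :
  (forall E : ltl AP -> Prop, E_base E \/ E_models E -> E_Buchi E) /\
  (exists E : ltl AP -> Prop, E_Buchi E /\ ~ (E_base E \/ E_models E)).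
Proof.
split.
- move=> E [[X hX]|[X hX]].
  + by exists (aut X) => phi; rewrite hX base_buchi.
  + by exists (autK X) => phi; rewrite hX models_buchi.
- have /card_gt0P [p _] := HAP.
  exists (supp (Aeven p)); split; first by exists (Aeven p).
  case=> [[X hX]|[X hX]].
  + have hXs : forall psi, List.In psi X -> forall n, sat (u p (2 * n)) psi.
      by move=> psi hpsi; apply/even_supp/hX => M HM; apply: HM.
    have [N hN] := stab_list p X.
    have hodd : forall psi, List.In psi X -> sat (u p (2 * N).+1) psi.
      move=> psi hpsi; apply/(hN psi hpsi); first lia.
      by apply/(hN psi hpsi (2 * N)); [lia | apply: hXs].
    pose phi := LNeg (nextn (2 * N).+1 (LAtom p)).
    have hphi : supp (Aeven p) phi.
      apply/even_supp => n; rewrite /sat /= sat_nextn /= /u.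
      by case: eqP => [e|_]; [lia | rewrite inE].
    have hC := (hX phi).1 hphi.
    have hij : (2 * N).+2 <= (2 * N).+2 by [].
    have hequ : forall m, u p (2 * N).+1 (lg (2 * N).+2 (2 * N).+2 m) = u p (2 * N).+1 m.
      move=> m; rewrite lg_same /u; case: (leqP m (2 * N).+2) => hm.
      * by [].
      * by case: eqP => e; case: eqP => e' //; lia.
    have hM : kmodels (lassoK hij (u p (2 * N).+1)) phi.
      apply: hC => psi hpsi; apply/lassoK_models; apply/(sat_ext psi hequ).
      exact: hodd.
    move/lassoK_models: hM => /(sat_ext phi hequ).
    rewrite /sat /= sat_nextn /= /u; apply.
    by rewrite eqxx inE eqxx.
  + have hF : forall M, List.In M X -> kmodels M (Fp p).
      apply/hX/even_supp => n; apply/sat_Fp; exists (2 * n).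
      by rewrite /u eqxx inE.
    have hW : forall M, List.In M X -> kmodels M (within p (bnd X)).
      move=> M hM pi [r [h0 [hT hl]]]; apply: NNPP => hn.
      have hnp : forall k, k < bnd X -> p \notin pi k.
        move=> k hk; apply/negP => hpk; apply: hn; rewrite /sat sat_within.
        by exists k; split.
      have [a [b [/andP [hab hb] he]]] := pigeon r.
      have hle : a <= b.-1 by lia.
      have ht : ktrace M (fun m => pi (lg a b.-1 m)).
        exists (fun m => r (lg a b.-1 m)); split; [|split].
        * exact: h0.
        * apply: (lg_step (Q := fun k l => kT M (r k) (r l))) => //.
          have eb : b.-1.+1 = b by lia.
          by have := hT b.-1; rewrite eb -he.
        * by move=> m; rewrite hl.
      have [k hk] := (sat_Fp p _).1 (hF M hM _ ht).
      have hlg := lg_le k hle.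
      have hbd := bnd_le hM.
      have hlt : lg a b.-1 k < bnd X by lia.
      by move: (hnp _ hlt); rewrite hk.
    have := (even_supp p (within p (bnd X))).1 ((hX _).2 hW) (bnd X).
    rewrite /sat sat_within => [[k [hk]]].
    rewrite /u add0n; case: eqP => e; last by rewrite inE.
    lia.
Qed.
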